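(* Let $G$ be a maximal outerplanar graph (with a fixed outerplanar embedding) with reduced graph $\widetilde{G}$ and almost-dual graph $\widehat{G}$. Then the following three sets are in one-to-one correspondence: the sets of central vertices of the copies of $S_3$ in $G$; the triangles (cycles on three vertices) in $\widetilde{G}$; and the vertices of degree $3$ in $\widehat{G}$.
   Context: A graph is maximal outerplanar if it is outerplanar and adding any single new edge yields a non-outerplanar graph. $S_3$ is the graph with vertices $x_1,x_2,x_3,y_1,y_2,y_3$ and edges $\{x_1,x_2\},\{x_1,x_3\},\{x_2,x_3\},\{x_1,y_1\},\{x_2,y_1\},\{x_2,y_2\},\{x_3,y_2\},\{x_3,y_3\},\{x_1,y_3\}$; its central vertices are $x_1,x_2,x_3$ and its central edges are the three edges among them. A copy of $S_3$ in $G$ is an induced subgraph of $G$ isomorphic to $S_3$. The reduced graph $\widetilde{G}$ is obtained by coloring, for every copy of $S_3$ in $G$, its central vertices and central edges, and then deleting from $G$ all uncolored vertices and uncolored edges. The almost-dual graph $\widehat{G}$ (with respect to the fixed embedding) has one vertex for every inner face of $G$, two vertices being adjacent iff the corresponding inner faces share an edge of $G$. *)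

(* Defs.v *)
From mathcomp Require Import all_boot.
Set Implicit Arguments. Unset Strict Implicit. Unset Printing Implicit Defensive.

Section Graphs.
Variable T : finType.

Definition simple_graph (e : rel T) : Prop := symmetric e /\ irreflexive e.

Definition add_edge (e : rel T) (u v : T) : rel T :=
  fun x y => [|| e x y, (x == u) && (y == v) | (x == v) && (y == u)].

(* An outerplanar embedding: vertices placed at distinct positions p x on a
   circle (in this cyclic order), edges drawn as straight chords, no two chords
   crossing.  Chords {a,b} and {c,d} cross iff their endpoints interleave. *)
Definition cross (p : T -> nat) (a b c d : T) : bool :=
  [|| (p a < p c < p b) && (p b < p d),
      (p b < p c < p a) && (p a < p d),
      (p a < p d < p b) && (p b < p c) | (p b < p d < p a) && (p a < p c)].

Definition outerplanar_emb (e : rel T) (p : T -> nat) : Prop :=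
  injective p /\ forall a b c d, e a b -> e c d -> ~~ cross p a b c d.

Definition outerplanar (e : rel T) : Prop := exists p, outerplanar_emb e p.

Definition maximal_outerplanar (e : rel T) : Prop :=
  outerplanar e /\
  forall u v, u != v -> ~~ e u v -> ~ outerplanar (add_edge e u v).

(* S_3 on 'I_6 : 0,1,2 = x1,x2,x3 (central), 3,4,5 = y1,y2,y3. *)
Definition S3e (i j : nat) : bool :=
  [|| [&& i < 3, j < 3 & i != j],
      (i == 3) && ((j == 0) || (j == 1)),
      (i == 4) && ((j == 1) || (j == 2)) |
      (i == 5) && ((j == 2) || (j == 0))].

Definition S3adj (i j : 'I_6) : bool := S3e i j || S3e j i.

Definition copyS3 (e : rel T) (f : {ffun 'I_6 -> T}) : bool :=
  injectiveb f && [forall i, forall j, e (f i) (f j) == S3adj i j].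

Definition central_set (f : {ffun 'I_6 -> T}) : {set T} :=
  [set f i | i : 'I_6 & (i < 3)%N].

Definition central_sets (e : rel T) : {set {set T}} :=
  [set central_set f | f in [pred f | copyS3 e f]].

Definition colored_vertex (e : rel T) (v : T) : bool :=
  [exists f, copyS3 e f && [exists i : 'I_6, (i < 3)%N && (f i == v)]].

Definition colored_edge (e : rel T) (u v : T) : bool :=
  [exists f, copyS3 e f && [exists i : 'I_6, exists j : 'I_6,
     [&& (i < 3)%N, (j < 3)%N, i != j, f i == u & f j == v]]].

Definition reduced_vertices (e : rel T) : {set T} := [set v | colored_vertex e v].
Definition reduced_rel (e : rel T) : rel T :=
  fun u v => [&& colored_vertex e u, colored_vertex e v & colored_edge e u v].

Definition triangles (r : rel T) : {set {set T}} :=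
  [set X : {set T} | (#|X| == 3) && [forall u in X, forall v in X, (u != v) ==> r u v]].

(* u, v are cyclically consecutive among the vertices of F (in the circular order p). *)
Definition consec_lt (p : T -> nat) (F : {set T}) (u v : T) : bool :=
  (p u < p v) &&
  ([forall w in F, ~~ ((p u < p w) && (p w < p v))] ||
   [forall w in F, (p u <= p w) && (p w <= p v)]).

Definition consec (p : T -> nat) (F : {set T}) (u v : T) : bool :=
  consec_lt p F u v || consec_lt p F v u.

(* An inner (bounded) face of the convex chord drawing: a polygon on the vertex
   set F (|F| >= 3) whose sides (cyclically consecutive vertices of F) are edges
   of G and whose interior contains no chord (no edge between non-consecutive
   vertices of F). *)
Definition inner_face (e : rel T) (p : T -> nat) (F : {set T}) : bool :=
  (3 <= #|F|) &&
  [forall u in F, forall v in F, (u != v) ==> (e u v == consec p F u v)].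

Definition dual_adj (e : rel T) (p : T -> nat) (F1 F2 : {set T}) : bool :=
  (F1 != F2) &&
  [exists u, exists v, [&& u != v, e u v, u \in F1, v \in F1, u \in F2, v \in F2,
                         consec p F1 u v & consec p F2 u v]].

Definition almost_dual_vertices (e : rel T) (p : T -> nat) : {set {set T}} :=
  [set F | inner_face e p F].

Definition almost_dual_degree (e : rel T) (p : T -> nat) (F : {set T}) : nat :=
  #|[set F2 | inner_face e p F2 & dual_adj e p F F2]|.

Definition almost_dual_deg3 (e : rel T) (p : T -> nat) : {set {set T}} :=
  [set F | inner_face e p F & almost_dual_degree e p F == 3].

End Graphs.

(* Main.v *)
Require Import Defs.
From mathcomp Require Import all_boot zify.
Set Implicit Arguments. Unset Strict Implicit. Unset Printing Implicit Defensive.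

Definition oo (n : nat) (h : (n < 6)%N) : 'I_6 := Ordinal h.
Lemma fin1 (i j : 'I_6) : i < 3 -> j < 3 -> i != j -> S3adj i j /\
  exists k l : 'I_6, [&& (k < 3)%N, k != i, k != j, S3adj i k, S3adj j k, S3adj l i,
     S3adj l j & (3 <= l)%N].
Proof.
case: i => [[|[|[|?]]] hi] //; case: j => [[|[|[|?]]] hj] // _ _ _; split => //.
- by exists (@oo 2 isT), (@oo 3 isT).
- by exists (@oo 1 isT), (@oo 5 isT).
- by exists (@oo 2 isT), (@oo 3 isT).
- by exists (@oo 0 isT), (@oo 4 isT).
- by exists (@oo 1 isT), (@oo 5 isT).
- by exists (@oo 0 isT), (@oo 4 isT).
Qed.

Lemma cards3g (T0 : finType) (a b c : T0) : a != b -> b != c -> a != c -> #|[set a; b; c]| = 3.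
Proof.
move=> ab bc ac; rewrite -setUA cardsU cards1 cards2 bc.
have -> : [set a] :&: [set b; c] = set0.
  apply/setP=> z; rewrite !inE; apply/negP=> /andP[/eqP -> ].
  by rewrite (negbTE ab) (negbTE ac).
by rewrite cards0.
Qed.

Section Main.
Variable T : finType.
Variable e : rel T.
Variable p : T -> nat.
Hypothesis esym : symmetric e.
Hypothesis eirr : irreflexive e.
Hypothesis pinj : injective p.
Hypothesis N : forall a b c d, e a b -> e c d -> ~~ cross p a b c d.
Hypothesis M : forall u v, u != v -> ~~ e u v -> ~ outerplanar (add_edge e u v).

Lemma pneq x y : x != y -> p x != p y.
Proof. by apply: contra => /eqP/pinj ->. Qed.

Lemma F1 a b c d : e a b -> e c d -> p a < p c < p b -> p a <= p d <= p b.
Proof.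
move=> hab hcd; have := N hab hcd; have := N hcd hab; rewrite /cross; lia.
Qed.

Lemma F1o a b c d : e a b -> e c d -> p a < p b -> (p c < p a) || (p b < p c) ->
  ~~ (p a < p d < p b).
Proof.
move=> hab hcd hlt hc; apply/negP=> hd.
have hdc : e d c by rewrite esym.
have := F1 hab hdc hd. lia.
Qed.

Lemma F2 u v : u != v -> ~~ e u v -> p u < p v ->
  exists c d, [/\ e c d, p u < p c < p v & (p d < p u) || (p v < p d)].
Proof.
move=> huv heuv hlt.
case: (boolP [exists c, exists d, [&& e c d, p u < p c < p v & (p d < p u) || (p v < p d)]]).
  by move/existsP=> [c /existsP [d /and3P [h1 h2 h3]]]; exists c, d.
move=> Hn; exfalso; apply: (M huv heuv); exists p; split=> // a b c d.
have H' : forall c d, e c d -> ~~ [&& p u < p c < p v & (p d < p u) || (p v < p d)].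
  move=> c0 d0 h; move: Hn; rewrite negb_exists => /forallP/(_ c0).
  by rewrite negb_exists => /forallP/(_ d0); rewrite h.
rewrite /add_edge => hab hcd.
case/or3P: hab => [hab| /andP[/eqP ea /eqP eb] | /andP[/eqP ea /eqP eb]];
case/or3P: hcd => [hcd| /andP[/eqP ec /eqP ed] | /andP[/eqP ec /eqP ed]]; subst.
all: try exact: N hab hcd.
all: try (have h1 := H' _ _ hab; have hba : e b a by rewrite esym).
all: try (have h2 := H' _ _ hba).
all: try (have h3 := H' _ _ hcd; have hdc : e d c by rewrite esym).
all: try (have h4 := H' _ _ hdc).
all: rewrite /cross; lia.
Qed.

Lemma ex_minp (P : pred T) w : P w -> exists2 m, P m & forall x, P x -> p m <= p x.
Proof. by move=> Pw; case: (arg_minnP p Pw) => m Pm Hm; exists m. Qed.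

Lemma ex_maxp (P : pred T) w : P w -> exists2 m, P m & forall x, P x -> p x <= p m.
Proof. by move=> Pw; case: (arg_maxnP p Pw) => m Pm Hm; exists m. Qed.

Lemma eqp x y : p x = p y -> x = y.
Proof. exact: pinj. Qed.

Lemma neq_of_lt x y : p x < p y -> x != y.
Proof. by apply: contraTneq => ->; rewrite ltnn. Qed.

Lemma apex_in a b w : e a b -> p a < p b -> p a < p w < p b ->
  exists y, [/\ p a < p y < p b, e a y & e y b].
Proof.
move=> hab hlt hw.
have [w0 Hw0 Hmin] := ex_minp (P := fun x => p a < p x < p b) hw.
have haw0 : e a w0.
  apply/negPn/negP => hn.
  have [c [d [hcd hc _]]] := F2 (neq_of_lt (proj1 (andP Hw0))) hn (proj1 (andP Hw0)).
  have := Hmin c; move: Hw0 hc; lia.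
have [y /andP [Hy hay] Hmax] := ex_maxp (P := fun x => (p a < p x < p b) && e a x)
   (w := w0) (introT andP (conj Hw0 haw0)).
exists y; split => //.
apply/negPn/negP => hn.
have hyb : p y < p b by move: Hy; lia.
have [c [d [hcd hc hd]]] := F2 (neq_of_lt hyb) hn hyb.
have hF := F1 hab hcd (_ : p a < p c < p b).
have {hF} hF : p a <= p d <= p b by apply: hF; move: Hy hc; lia.
have [hda|hda] := eqVneq (p d) (p a).
  have hda' := eqp hda; subst d.
  have hac : e a c by rewrite esym.
  have := Hmax c; rewrite hac andbT; move: Hy hc; lia.
have hdc : e d c by rewrite esym.
have := F1 hay hdc (_ : p a < p d < p y).
move: Hy hc hd hF hda; lia.
Qed.

Lemma apex_out a b w : e a b -> p a < p b -> (p w < p a) || (p b < p w) ->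
  exists y, [/\ (p y < p a) || (p b < p y), e a y & e y b].
Proof.
move=> hab hlt hw.
case: (boolP [exists y, (p y < p a) && e y b]).
  case/existsP=> y0 Hy0.
  have [y /andP [Hy hyb] Hmax] := ex_maxp (P := fun x => (p x < p a) && e x b) Hy0.
  exists y; split => //; first by rewrite Hy.
  apply/negPn/negP => hn.
  have hya : e y a = false by rewrite esym; apply/negbTE.
  have [c [d [hcd hc hd]]] := F2 (neq_of_lt Hy) (negbT hya) Hy.
  have hby : e b y by rewrite esym.
  have h1 := F1o hab hcd hlt (_ : (p c < p a) || (p b < p c)).
  have h2 := F1 hby.
  have [hdb|hdb] := eqVneq (p d) (p b).
    have hdb' := eqp hdb; subst d.
    have := Hmax c; rewrite hcd; move: Hy hc; lia.
  have hyb' : e y b by [].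
  have h3 := F1 hyb' hcd.
  move: h1 h3 hc hd hdb Hy hlt; lia.
rewrite negb_exists => /forallP Hno.
have Hhigh : exists y, (p b < p y) && e y b.
  case: (boolP [exists x, p b < p x]).
    case/existsP=> x0 Hx0; have [w0 Hw0 Hmin] := ex_minp (P := fun x => p b < p x) Hx0.
    exists w0; rewrite Hw0 /=; rewrite esym.
    apply/negPn/negP => hn.
    have [c [d [hcd hc hd]]] := F2 (neq_of_lt Hw0) hn Hw0.
    have := Hmin c; move: hc; lia.
  rewrite negb_exists => /forallP Hnx.
  have [w0 _ Hmin] := ex_minp (P := predT) (w := w) isT.
  have Hw0 : p w0 < p a by have := Hmin w isT; have := Hnx w; move: hw; lia.
  have hw0b : p w0 < p b by lia.
  have := Hno w0; rewrite Hw0 /= => hn.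
  have [c [d [hcd hc hd]]] := F2 (neq_of_lt hw0b) hn hw0b.
  have := Hmin d isT; have := Hnx d; move: hd; lia.
case: Hhigh => y0 Hy0.
have [y /andP [Hy hyb] Hmax] := ex_maxp (P := fun x => (p b < p x) && e x b) Hy0.
exists y; split => //; first by rewrite Hy orbT.
apply/negPn/negP => hn.
have hay : p a < p y by lia.
have [c [d [hcd hc hd]]] := F2 (neq_of_lt hay) hn hay.
have [hcb|hcb] := eqVneq (p c) (p b).
  have hcb' := eqp hcb; subst c.
  have hdb : e d b by rewrite esym.
  have := Hno d; have := Hmax d; rewrite hdb andbT; move: hd Hy; lia.
have hby : e b y by rewrite esym.
have h1 := F1 hab hcd.
have h2 := F1 hby hcd.
move: h1 h2 hc hd hcb Hy hlt; lia.
Qed.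

Definition inb a b w := (p a < p w < p b) || (p b < p w < p a).

Lemma inbC a b w : inb a b w = inb b a w.
Proof. by rewrite /inb orbC. Qed.

Lemma opp_lt a b c y : p a < p b -> e a b -> e a c -> e b c -> e a y -> e b y ->
  y != c -> y != a -> y != b -> c != a -> c != b -> inb a b c != inb a b y.
Proof.
move=> hlt hab hac hbc hay hby nyc nya nyb nca ncb.
have hba : e b a by rewrite esym.
have hca : e c a by rewrite esym.
have hcb : e c b by rewrite esym.
have hya : e y a by rewrite esym.
have hyb : e y b by rewrite esym.
have nb : ~~ (p b < p c < p a) by move: hlt; clear; lia.
have nb' : ~~ (p b < p y < p a) by move: hlt; clear; lia.
rewrite /inb (negbTE nb) (negbTE nb') !orbF.
apply/negP => /eqP E.
case hc: (p a < p c < p b); move: E; rewrite hc => E.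
  case: (ltngtP (p y) (p c)) => hyc; last by move: hyc => /pinj E'; rewrite E' eqxx in nyc.
    by have := F1 hac hyb; move: hc E hyc hlt; clear; lia.
  by have := F1 hay hcb; move: hc E hyc hlt; clear; lia.
have hcab : (p c < p a) || (p b < p c).
  by have := pneq nca; have := pneq ncb; move: hc; clear; lia.
have hyab : (p y < p a) || (p b < p y).
  by have := pneq nya; have := pneq nyb; move: (Logic.eq_sym E); clear; lia.
case/orP: hcab => hc1; case/orP: hyab => hy1.
- case: (ltngtP (p y) (p c)) => hyc; last by move: hyc => /pinj E'; rewrite E' eqxx in nyc.
    by have := F1 hya hcb; move: hc1 hy1 hyc hlt; clear; lia.
  by have := F1 hca hyb; move: hc1 hy1 hyc hlt; clear; lia.
- by have := F1 hcb hay; move: hc1 hy1 hlt; clear; lia.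
- by have := F1 hyb hac; move: hc1 hy1 hlt; clear; lia.
- case: (ltngtP (p y) (p c)) => hyc; last by move: hyc => /pinj E'; rewrite E' eqxx in nyc.
    by have := F1 hbc hya; move: hc1 hy1 hyc hlt; clear; lia.
  by have := F1 hby hca; move: hc1 hy1 hyc hlt; clear; lia.
Qed.

Lemma opp a b c y : e a b -> e a c -> e b c -> e a y -> e b y ->
  y != c -> y != a -> y != b -> c != a -> c != b -> inb a b c != inb a b y.
Proof.
move=> hab hac hbc hay hby nyc nya nyb nca ncb.
have /eqP pab : p a <> p b.
  by apply/eqP/pneq; apply: contraTneq hab => ->; rewrite eirr.
have [h|h] : (p a < p b) \/ (p b < p a) by move: pab; clear; lia.
  exact: opp_lt.
rewrite inbC [inb a b y]inbC.
apply: opp_lt => //; by rewrite esym.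
Qed.

Definition fullb a b c := [&& p a < p b, p b < p c, e a b, e b c, e a c,
  [exists w, p a < p w < p b], [exists w, p b < p w < p c] &
  [exists w, (p w < p a) || (p c < p w)]].

Definition FT := [set X : {set T} | [exists a, exists b, exists c,
  (X == [set a; b; c]) && fullb a b c]].

Definition side u v t := exists y, [/\ y != u, y != v & inb u v t != inb u v y].

Lemma sideC u v t : side u v t -> side v u t.
Proof. by case=> y [h1 h2 h3]; exists y; split => //; rewrite inbC [inb v u y]inbC. Qed.

Lemma full_core a b c : p a < p b -> p b < p c -> e a b -> e b c -> e a c ->
  side a b c -> side b c a -> side a c b -> fullb a b c.
Proof.
move=> h1 h2 hab hbc hac [y1 [n1 n1' s1]] [y2 [n2 n2' s2]] [y3 [n3 n3' s3]].
rewrite /fullb h1 h2 hab hbc hac /=.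
apply/and3P; split; apply/existsP; [exists y1|exists y2|exists y3].
- by have := pneq n1; have := pneq n1'; move: s1 h1 h2; rewrite /inb; clear; lia.
- by have := pneq n2; have := pneq n2'; move: s2 h1 h2; rewrite /inb; clear; lia.
- by have := pneq n3; have := pneq n3'; move: s3 h1 h2; rewrite /inb; clear; lia.
Qed.

Lemma set3C1 (a b c : T) : [set a; b; c] = [set b; a; c].
Proof. by apply/setP=> i; rewrite !inE; case: (i == a); case: (i == b). Qed.
Lemma set3C2 (a b c : T) : [set a; b; c] = [set a; c; b].
Proof. by apply/setP=> i; rewrite !inE; case: (i == b); case: (i == c); rewrite ?orbT. Qed.

Lemma full_of a b c : e a b -> e b c -> e a c ->
  side a b c -> side b c a -> side a c b -> [set a; b; c] \in FT.
Proof.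
move=> hab hbc hac sab sbc sac.
have hba : e b a by rewrite esym.
have hcb : e c b by rewrite esym.
have hca : e c a by rewrite esym.
have nab : p a != p b by apply: pneq; apply: contraTneq hab => ->; rewrite eirr.
have nbc : p b != p c by apply: pneq; apply: contraTneq hbc => ->; rewrite eirr.
have nac : p a != p c by apply: pneq; apply: contraTneq hac => ->; rewrite eirr.
have mk x y z : p x < p y -> p y < p z -> fullb x y z -> [set a; b; c] = [set x; y; z] ->
   [set a; b; c] \in FT.
  move=> _ _ hf ->; rewrite inE; apply/existsP; exists x; apply/existsP; exists y;
  apply/existsP; exists z; by rewrite eqxx hf.
have sba := sideC sab. have scb := sideC sbc. have sca := sideC sac.
have [h1|h1] : p a < p b \/ p b < p a by move: nab; clear; lia.
all: have [h2|h2] : p b < p c \/ p c < p b by move: nbc; clear; lia.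
all: have [h3|h3] : p a < p c \/ p c < p a by move: nac; clear; lia.
all: try by exfalso; move: h1 h2 h3; clear; lia.
- by apply: (mk a b c) => //; apply: full_core.
- by apply: (mk a c b) => //; [apply: full_core | rewrite set3C2].
- by apply: (mk c a b) => //; [apply: full_core | rewrite set3C2 set3C1].
- by apply: (mk b a c) => //; [apply: full_core | rewrite set3C1].
- by apply: (mk b c a) => //; [apply: full_core | rewrite set3C1 set3C2].
- by apply: (mk c b a) => //; [apply: full_core | rewrite set3C1 set3C2 set3C1].
Qed.

Definition o0 : 'I_6 := @Ordinal 6 0 isT.
Definition o1 : 'I_6 := @Ordinal 6 1 isT.
Definition o2 : 'I_6 := @Ordinal 6 2 isT.

Lemma no_edge_same a b c y : e a b -> e a c -> e b c -> e a y -> e b y ->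
  y != c -> y != a -> y != b -> c != a -> c != b -> inb a b c = inb a b y -> False.
Proof.
move=> h1 h2 h3 h4 h5 h6 h7 h8 h9 h10 E.
by have := opp h1 h2 h3 h4 h5 h6 h7 h8 h9 h10; rewrite E eqxx.
Qed.

Lemma copy_of_full a b c : fullb a b c ->
  exists f, [/\ copyS3 e f, f o0 = a, f o1 = b & f o2 = c].
Proof.
case/and5P=> h1 h2 hab hbc /and4P[hac /existsP[w1 hw1] /existsP[w2 hw2] /existsP[w3 hw3]].
have hba : e b a by rewrite esym.
have hcb : e c b by rewrite esym.
have hca : e c a by rewrite esym.
have [y1 [hy1 hay1 hy1b]] := apex_in hab h1 hw1.
have [y2 [hy2 hby2 hy2c]] := apex_in hbc h2 hw2.
have [y3 [hy3 hay3 hy3c]] := apex_out hac (ltn_trans h1 h2) hw3.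
have hpos : [&& p a < p b, p b < p c, p a < p y1 < p b, p b < p y2 < p c &
   (p y3 < p a) || (p c < p y3)] by rewrite h1 h2 hy1 hy2 hy3.
have ne x y : p x != p y -> x != y by apply: contra => /eqP ->.
have hy1a : e y1 a by rewrite esym.
have hby1 : e b y1 by rewrite esym.
have hy2b : e y2 b by rewrite esym.
have hcy2 : e c y2 by rewrite esym.
have hy3a : e y3 a by rewrite esym.
have hcy3 : e c y3 by rewrite esym.
have n1 : e y1 c = false.
  apply/negbTE/negP => hy1c.
  have hcy1 : e c y1 by rewrite esym.
  apply: (no_edge_same (a:=b) (b:=c) (c:=a) (y:=y1)) => //; try apply: ne;
    move: hpos; rewrite /inb; clear; lia.
have n2 : e y2 a = false.
  apply/negbTE/negP => hy2a.
  have hay2 : e a y2 by rewrite esym.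
  apply: (no_edge_same (a:=a) (b:=b) (c:=c) (y:=y2)) => //; try apply: ne;
    move: hpos; rewrite /inb; clear; lia.
have n3 : e y3 b = false.
  apply/negbTE/negP => hy3b.
  have hby3 : e b y3 by rewrite esym.
  apply: (no_edge_same (a:=a) (b:=b) (c:=c) (y:=y3)) => //; try apply: ne;
    move: hpos; rewrite /inb; clear; lia.
have n12 : e y1 y2 = false.
  apply/negbTE/negP => h.
  by have := F1 h hba; move: hpos; clear; lia.
have n13 : e y1 y3 = false.
  apply/negbTE/negP => h.
  have h' : e y3 y1 by rewrite esym.
  by have := F1 h hba; have := F1 h' hab; move: hpos; clear; lia.
have n23 : e y2 y3 = false.
  apply/negbTE/negP => h.
  have h' : e y3 y2 by rewrite esym.
  by have := F1 h hcb; have := F1 h' hbc; move: hpos; clear; lia.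
have n1' : e c y1 = false by rewrite esym.
have n2' : e a y2 = false by rewrite esym.
have n3' : e b y3 = false by rewrite esym.
have n12' : e y2 y1 = false by rewrite esym.
have n13' : e y3 y1 = false by rewrite esym.
have n23' : e y3 y2 = false by rewrite esym.
exists [ffun i : 'I_6 => nth a [:: a; b; c; y1; y2; y3] i].
rewrite !ffunE; split => //.
apply/andP; split.
  apply/injectiveP => i j; rewrite !ffunE.
  case: i => [[|[|[|[|[|[|i]]]]]] Hi] //; case: j => [[|[|[|[|[|[|j]]]]]] Hj] //= h;
  apply/val_inj => //=; move: (congr1 p h) hpos; clear; lia.
apply/forallP => i; apply/forallP => j; rewrite !ffunE.
case: i => [[|[|[|[|[|[|i]]]]]] Hi] //; case: j => [[|[|[|[|[|[|j]]]]]] Hj] //=;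
  rewrite /S3adj /S3e /= ?eirr //.
all: by rewrite ?eqxx ?hab ?hac ?hbc ?hba ?hcb ?hca ?hay1 ?hy1b ?hy1a ?hby1 ?hby2 ?hy2c ?hy2b ?hcy2 ?hay3 ?hy3c ?hy3a ?hcy3 ?n1 ?n2 ?n3 ?n1' ?n2' ?n3' ?n12 ?n13 ?n23 ?n12' ?n13' ?n23'.
Qed.

Lemma cards3 (a b c : T) : a != b -> b != c -> a != c -> #|[set a; b; c]| = 3.
Proof.
move=> ab bc ac; rewrite -setUA cardsU cards1 cards2 bc.
have -> : [set a] :&: [set b; c] = set0.
  apply/setP=> z; rewrite !inE; apply/negP=> /andP[/eqP -> ].
  by rewrite (negbTE ab) (negbTE ac).
by rewrite cards0.
Qed.

Lemma card3E (X : {set T}) : #|X| = 3 ->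
  exists a b c, [/\ a != b, b != c, a != c & X = [set a; b; c]].
Proof.
move=> h; have : 2 < #|X| by rewrite h.
case/card_gt2P=> x [y [z [[xX yX zX] [xy yz zx]]]].
have xz : x != z by rewrite eq_sym.
exists x, y, z; split => //.
apply/Logic.eq_sym/eqP; rewrite eqEcard h cards3 // leqnn andbT.
by apply/subsetP => w; rewrite !inE -!orbA => /or3P [] /eqP ->.
Qed.

Lemma consec3 (a b c u v : T) : a != b -> b != c -> a != c ->
  u \in [set a; b; c] -> v \in [set a; b; c] -> u != v -> consec p [set a; b; c] u v.
Proof.
set F := [set a; b; c] => ab bc ac.
have main x y : x \in F -> y \in F -> p x < p y -> consec_lt p F x y.
  move=> hx hy hlt; rewrite /consec_lt hlt /=.
  case: (boolP [exists w in F, p x < p w < p y]).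
    case/exists_inP => w0 hw0 hw; apply/orP; right; apply/forall_inP => w hw'.
    have E : F = [set x; y; w0].
      have x_w0 : x != w0 by apply: neq_of_lt; move: hw; clear; lia.
      have y_w0 : y != w0 by rewrite eq_sym; apply: neq_of_lt; move: hw; clear; lia.
      apply/eqP; rewrite eq_sym eqEcard; apply/andP; split.
        apply/subsetP => z; rewrite !inE -!orbA => /or3P [] /eqP ->;
        [move: hx|move: hy|move: hw0]; by rewrite !inE -!orbA.
      by rewrite /F (cards3 ab bc ac) (cards3 (neq_of_lt hlt) y_w0 x_w0).
    move: hw'; rewrite E !inE -!orbA => /or3P [] /eqP ->; move: hw hlt; clear; lia.
  by rewrite negb_exists_in => /forall_inP H; apply/orP; left; apply/forall_inP.
move=> hu hv huv; rewrite /consec.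
have := pneq huv => puv.
have [h|h] : p u < p v \/ p v < p u by move: puv; clear; lia.
  by rewrite main //=.
by rewrite (main v u) ?orbT.
Qed.

Lemma tri_face a b c : e a b -> e b c -> e a c -> inner_face e p [set a; b; c].
Proof.
move=> hab hbc hac.
have ab : a != b by apply: contraTneq hab => ->; rewrite eirr.
have bc : b != c by apply: contraTneq hbc => ->; rewrite eirr.
have ac : a != c by apply: contraTneq hac => ->; rewrite eirr.
rewrite /inner_face cards3 //=.
apply/forall_inP => u hu; apply/forall_inP => v hv; apply/implyP => huv.
rewrite consec3 //.
have hba : e b a by rewrite esym.
have hcb : e c b by rewrite esym.
have hca : e c a by rewrite esym.
move: hu hv huv; rewrite !inE -!orbA => /or3P [] /eqP -> /or3P [] /eqP ->; rewrite ?eqxx // => _;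
  by rewrite ?hab ?hbc ?hac ?hba ?hcb ?hca.
Qed.

Lemma face_hyp F : inner_face e p F ->
  forall u v, u \in F -> v \in F -> u != v -> e u v = consec p F u v.
Proof.
case/andP=> _ /forall_inP H u v hu hv huv.
by move: (H u hu) => /forall_inP/(_ v hv)/implyP/(_ huv)/eqP.
Qed.

Lemma gap F : inner_face e p F -> forall x u v, x \notin F -> u \in F -> v \in F ->
  p u < p x < p v ->
  exists f f', [/\ f \in F, f' \in F, e f f', p f < p x < p f' &
     forall w, w \in F -> ~~ (p f < p w < p f')].
Proof.
move=> hF x u v hx hu hv hw.
have hu' : (u \in F) && (p u < p x) by rewrite hu; case/andP: hw.
have hv' : (v \in F) && (p x < p v) by rewrite hv; case/andP: hw.
have [f /andP[hf hfx] Hf] := ex_maxp (P := fun w => (w \in F) && (p w < p x)) hu'.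
have [f' /andP[hf' hf'x] Hf'] := ex_minp (P := fun w => (w \in F) && (p x < p w)) hv'.
have hno : forall w, w \in F -> ~~ (p f < p w < p f').
  move=> w hwF; apply/negP => hb.
  have wx : w != x by apply: contraNneq hx => <-.
  have pwx := pneq wx.
  have := Hf w; have := Hf' w; rewrite hwF /=; move: hb pwx hfx hf'x; clear; lia.
have hlt : p f < p f' by move: hfx hf'x; clear; lia.
exists f, f'; split => //; last by rewrite hfx hf'x.
rewrite (face_hyp hF hf hf' (neq_of_lt hlt)) /consec /consec_lt hlt /=.
by apply/orP; left; apply/orP; left; apply/forall_inP.
Qed.

Lemma no_cross_face F mn mx : inner_face e p F -> mn \in F -> mx \in F ->
  (forall w, w \in F -> p mn <= p w <= p mx) ->
  forall u v c d, u \in F -> v \in F -> e c d -> p u < p c < p v ->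
  (p d < p u) || (p v < p d) -> False.
Proof.
move=> hF hmn hmx hext u v c d hu hv hcd hc hd.
have hdc : e d c by rewrite esym.
have hmnmx : p mn < p mx.
  by have := hext u hu; have := hext v hv; move: hc; clear; lia.
have emm : e mn mx.
  rewrite (face_hyp hF hmn hmx (neq_of_lt hmnmx)) /consec /consec_lt hmnmx /=.
  by apply/orP; left; apply/orP; right; apply/forall_inP.
have hdrange : p mn <= p d <= p mx.
  apply: (F1 emm hcd).
  by have := hext u hu; have := hext v hv; move: hc; clear; lia.
case: (boolP (c \in F)) => cF.
  case: (boolP (d \in F)) => dF.
    have cd : c != d by apply: contraTneq hd => <-; move: hc; clear; lia.
    have hcons : consec p F c d by rewrite -(face_hyp hF cF dF cd).
    move: hcons; rewrite /consec /consec_lt.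
    case/orP => /andP [hlt /orP [/forall_inP H | /forall_inP H]];
      [ have := H v hv | have := H u hu | have := H u hu | have := H v hv ];
      move: hc hd hlt; clear; lia.
  have hd' : p mn < p d < p mx.
    have dmn : d != mn by apply: contraNneq dF => ->.
    have dmx : d != mx by apply: contraNneq dF => ->.
    have := pneq dmn; have := pneq dmx; move: hdrange; clear; lia.
  have [f [f' [hf hf' hff' hdf hno]]] := gap hF dF hmn hmx hd'.
  have := F1 hff' hdc hdf.
  have := hno c cF; have := hno u hu; have := hno v hv.
  move: hc hd hdf; clear; lia.
have [f [f' [hf hf' hff' hcf hno]]] := gap hF cF hu hv hc.
have := F1 hff' hcd hcf.
have := hno u hu; have := hno v hv.
move: hc hd hcf; clear; lia.
Qed.

Lemma face_tri F : inner_face e p F ->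
  exists a b c, [/\ e a b, e b c, e a c & F = [set a; b; c]].
Proof.
move=> hF; have h3 : 3 <= #|F| by case/andP: hF.
have /card_gt0P [x0 hx0] : 0 < #|F| by move: h3; clear; lia.
have [mn hmn Hmn] := ex_minp (P := fun w => w \in F) hx0.
have [mx hmx Hmx] := ex_maxp (P := fun w => w \in F) hx0.
have hext : forall w, w \in F -> p mn <= p w <= p mx.
  by move=> w hw; rewrite Hmn ?Hmx.
have [h4|h3'] : 4 <= #|F| \/ #|F| = 3 by move: h3; clear; lia.
  exfalso.
  have c1 := cardsD1 mn F; have c2 := cardsD1 mx (F :\ mn).
  have c3 := leq_b1 (mx \in F :\ mn).
  have : 1 < #|F :\ mn :\ mx| by move: c1 c2 c3 h4; rewrite hmn; clear; lia.
  case/card_gt1P => x [y [hx hy xy]].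
  move: hx hy; rewrite !inE => /and3P [xmx xmn xF] /and3P [ymx ymn yF].
  suff claim : forall x y, x \in F -> y \in F -> x != mn -> x != mx ->
      y != mn -> y != mx -> p x < p y -> False.
    have := pneq xy => pxy.
    have [h|h] : p x < p y \/ p y < p x by move: pxy; clear; lia.
      exact: (claim x y).
    exact: (claim y x).
  move=> {xmx xmn xF ymx ymn yF xy x y} x y xF yF xmn xmx ymn ymx hxy.
  have hmnx : p mn < p x by have := pneq xmn; have := hext x xF; clear; lia.
  have hymx : p y < p mx by have := pneq ymx; have := hext y yF; clear; lia.
  have hmny : p mn < p y by move: hmnx hxy; clear; lia.
  have nc : ~~ e mn y.
    rewrite (face_hyp hF hmn yF (neq_of_lt hmny)) /consec /consec_lt negb_or.
    apply/andP; split; apply/negP => /andP [hlt /orP [/forall_inP H | /forall_inP H]].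
    - by have := H x xF; move: hmnx hxy; clear; lia.
    - by have := H mx hmx; move: hymx; clear; lia.
    - by move: hlt hmny; clear; lia.
    - by move: hlt hmny; clear; lia.
  have [c [d [hcd hc hd]]] := F2 (neq_of_lt hmny) nc hmny.
  exact: (no_cross_face hF hmn hmx hext hmn yF hcd hc hd).
have [a [b [c [ab bc ac hF3]]]] := card3E h3'.
have hin : forall u v, u \in [set a; b; c] -> v \in [set a; b; c] -> u != v -> e u v.
  move=> u v hu hv huv.
  have huF : u \in F by rewrite hF3.
  have hvF : v \in F by rewrite hF3.
  by rewrite (face_hyp hF huF hvF huv) hF3; apply: consec3.
exists a, b, c; split => //; apply: hin; rewrite ?inE ?eqxx ?orbT //.
Qed.

Definition o3 : 'I_6 := @Ordinal 6 3 isT.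
Definition o4 : 'I_6 := @Ordinal 6 4 isT.
Definition o5 : 'I_6 := @Ordinal 6 5 isT.

Lemma S3adjC i j : S3adj i j = S3adj j i.
Proof. by rewrite /S3adj orbC. Qed.

Lemma copyE f : copyS3 e f -> (forall i j, e (f i) (f j) = S3adj i j) /\ injective f.
Proof.
case/andP=> /injectiveP inj /forallP H; split=> // i j.
exact/eqP/(forallP (H i) j).
Qed.

Lemma central_setE (f : {ffun 'I_6 -> T}) : central_set f = [set f o0; f o1; f o2].
Proof.
apply/setP=> z; rewrite !inE -!orbA; apply/imsetP/or3P.
  case=> i; rewrite inE => hi ->.
  case: i hi => [[|[|[|?]]] Hi] //= _; [apply: Or31|apply: Or32|apply: Or33];
    apply/eqP; congr (f _); exact: val_inj.
by case=> /eqP ->; [exists o0|exists o1|exists o2]; rewrite ?inE.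
Qed.

Lemma side_of a b c y : e a b -> e a c -> e b c -> e a y -> e b y ->
  y != c -> y != a -> y != b -> c != a -> c != b -> side a b c.
Proof. by move=> *; exists y; split => //; apply: opp. Qed.

Lemma C1 : central_sets e = FT.
Proof.
apply/setP => X; apply/idP/idP.
  case/imsetP => f; rewrite inE => hf ->.
  have [E inj] := copyE hf.
  have nf i j : i != j -> f i != f j by move=> ij; apply: contra ij => /eqP/inj ->.
  rewrite central_setE; apply: full_of; rewrite ?E //.
  - by apply: (side_of (y := f o3)); rewrite ?E //; apply: nf.
  - by apply: (side_of (y := f o4)); rewrite ?E //; apply: nf.
  - by apply: (side_of (y := f o5)); rewrite ?E //; apply: nf.
rewrite inE => /existsP [a /existsP [b /existsP [c /andP [/eqP -> hf]]]].
have [f [hc h0 h1 h2]] := copy_of_full hf.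
by apply/imsetP; exists f; rewrite ?inE // central_setE h0 h1 h2.
Qed.

Lemma red_of_copy (f : {ffun 'I_6 -> T}) (i j : 'I_6) : copyS3 e f -> i < 3 -> j < 3 -> i != j ->
  reduced_rel e (f i) (f j).
Proof.
move=> hf hi hj ij; rewrite /reduced_rel /colored_vertex /colored_edge.
apply/and3P; split; apply/existsP; exists f; rewrite hf /=.
- by apply/existsP; exists i; rewrite hi eqxx.
- by apply/existsP; exists j; rewrite hj eqxx.
- by apply/existsP; exists i; apply/existsP; exists j; rewrite hi hj ij !eqxx.
Qed.

Lemma col_e u v : colored_edge e u v -> e u v.
Proof.
case/existsP => g /andP [hg /existsP [i /existsP [j /and5P [hi hj ij /eqP <- /eqP <-]]]].
have [E _] := copyE hg; rewrite E; by case: (fin1 hi hj ij).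
Qed.

Lemma L_col u v t : colored_edge e u v -> e u t -> e v t -> t != u -> t != v -> side u v t.
Proof.
case/existsP => g /andP [hg /existsP [i /existsP [j /and5P [hi hj ij /eqP hu /eqP hv]]]].
move=> hut hvt ntu ntv.
have [E inj] := copyE hg.
have nf x y : x != y -> g x != g y by move=> xy; apply: contra xy => /eqP/inj ->.
have [hij [k [l /and5P [hk3 ki kj hik /and4P [hjk hli hlj hl3]]]]] := fin1 hi hj ij.
subst u v.
have euv : e (g i) (g j) by rewrite E.
have lk : l != k by apply/negP => /eqP E'; move: hk3 hl3; rewrite E'; clear; lia.
have li : l != i by apply/negP => /eqP E'; move: hi hl3; rewrite E'; clear; lia.
have lj : l != j by apply/negP => /eqP E'; move: hj hl3; rewrite E'; clear; lia.
case: (eqVneq (g k) t) => hk.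
  subst t; apply: (side_of (y := g l)); rewrite ?E ?(S3adjC i l) ?(S3adjC j l) //; apply: nf => //.
by apply: (side_of (y := g k)); rewrite ?E //; apply: nf.
Qed.

Lemma C2 : triangles (reduced_rel e) = FT.
Proof.
apply/setP => X; apply/idP/idP.
  rewrite inE => /andP [/eqP h3 /forall_inP H].
  have [a [b [c [ab bc ac hX]]]] := card3E h3.
  have R u v : u \in X -> v \in X -> u != v -> colored_edge e u v.
    by move=> hu hv huv; move: (H u hu) => /forall_inP/(_ v hv)/implyP/(_ huv)/and3P[_ _].
  have inX : [/\ a \in X, b \in X & c \in X] by rewrite hX !inE !eqxx ?orbT.
  case: inX => aX bX cX.
  have ba : b != a by rewrite eq_sym.
  have cb : c != b by rewrite eq_sym.
  have ca : c != a by rewrite eq_sym.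
  have hab := col_e (R _ _ aX bX ab).
  have hbc := col_e (R _ _ bX cX bc).
  have hac := col_e (R _ _ aX cX ac).
  have hba : e b a by rewrite esym.
  have hcb : e c b by rewrite esym.
  have hca : e c a by rewrite esym.
  rewrite hX; apply: full_of => //.
  - exact: L_col (R _ _ aX bX ab) hac hbc ca cb.
  - exact: L_col (R _ _ bX cX bc) hba hca ab ac.
  - exact: L_col (R _ _ aX cX ac) hab hcb ba bc.
rewrite inE => /existsP [a /existsP [b /existsP [c /andP [/eqP -> hf]]]].
have [f [hc h0 h1 h2]] := copy_of_full hf.
have hpos : (p a < p b) && (p b < p c) by case/and3P: hf => -> ->.
have ab : a != b by apply: neq_of_lt; case/andP: hpos.
have bc : b != c by apply: neq_of_lt; case/andP: hpos.
have ac : a != c by apply: neq_of_lt; case/andP: hpos => h h'; exact: ltn_trans h h'.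
rewrite inE cards3 // eqxx /=.
apply/forall_inP => u hu; apply/forall_inP => v hv; apply/implyP => huv.
move: hu hv huv; rewrite !inE -!orbA -h0 -h1 -h2.
by case/or3P => /eqP -> /or3P [] /eqP -> huv; rewrite ?eqxx // in huv; apply: red_of_copy.
Qed.

Definition sideb u v t := [exists y, [&& y != u, y != v & inb u v t != inb u v y]].

Lemma sideP u v t : reflect (side u v t) (sideb u v t).
Proof.
apply: (iffP existsP) => [[y /and3P [h1 h2 h3]]|[y [h1 h2 h3]]]; exists y => //.
by rewrite h1 h2 h3.
Qed.

Lemma apex_sep_lt u v t : p u < p v -> e u v -> side u v t ->
  exists y, [/\ e u y, e v y, y != u, y != v & inb u v t != inb u v y].
Proof.
move=> hlt huv [w [wu wv hw]].
case hin : (inb u v w).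
  have hw' : p u < p w < p v by move: hin hlt; rewrite /inb; clear; lia.
  have [y [hy huy hyv]] := apex_in huv hlt hw'.
  exists y; split => //.
  - by rewrite esym.
  - by rewrite eq_sym; apply: neq_of_lt; case/andP: hy.
  - by apply: neq_of_lt; case/andP: hy.
  - have -> : inb u v y by rewrite /inb hy.
    by rewrite -hin.
have hw' : (p w < p u) || (p v < p w).
  by have := pneq wu; have := pneq wv; move: hin hlt; rewrite /inb; clear; lia.
have [y [hy huy hyv]] := apex_out huv hlt hw'.
exists y; split => //.
- by rewrite esym.
- by apply/negP => /eqP E; move: hy hlt; rewrite E; clear; lia.
- by apply/negP => /eqP E; move: hy hlt; rewrite E; clear; lia.
- have -> : inb u v y = false by move: hy hlt; rewrite /inb; clear; lia.
  by rewrite -hin.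
Qed.

Lemma apex_sep u v t : e u v -> side u v t ->
  exists y, [/\ e u y, e v y, y != u, y != v & inb u v t != inb u v y].
Proof.
move=> huv hs.
have uv : u != v by apply: contraTneq huv => ->; rewrite eirr.
have [h|h] : p u < p v \/ p v < p u by have := pneq uv; clear; lia.
  exact: apex_sep_lt.
have hvu : e v u by rewrite esym.
have [y [h1 h2 h3 h4 h5]] := apex_sep_lt h hvu (sideC hs).
by exists y; split => //; rewrite inbC [inb u v y]inbC.
Qed.

Lemma face_card3 F : inner_face e p F -> #|F| = 3.
Proof.
move=> hF; have [a [b [c [hab hbc hac ->]]]] := face_tri hF.
apply: cards3; [apply: contraTneq hab|apply: contraTneq hbc|apply: contraTneq hac];
  by move=> ->; rewrite eirr.
Qed.

Lemma third F u v : inner_face e p F -> u \in F -> v \in F -> u != v ->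
  exists w, [/\ F = [set u; v; w], w != u, w != v, e u w & e v w].
Proof.
move=> hF hu hv uv.
have h3 := face_card3 hF.
have c1 := cardsD1 u F; have c2 := cardsD1 v (F :\ u).
have c3 := leq_b1 (v \in F :\ u).
have /card_gt0P [w] : 0 < #|F :\ u :\ v| by move: c1 c2 c3 h3; rewrite hu; clear; lia.
rewrite !inE => /and3P [wv wu wF].
have FE : F = [set u; v; w].
  apply/eqP; rewrite eq_sym eqEcard; apply/andP; split.
    by apply/subsetP => z; rewrite !inE -!orbA => /or3P [] /eqP ->.
  by rewrite h3 cards3 //; rewrite eq_sym.
exists w; split => //.
- have uw : u != w by rewrite eq_sym.
  rewrite (face_hyp hF hu wF uw) FE; apply: consec3 => //; first by rewrite eq_sym.
    by rewrite !inE eqxx.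
  by rewrite !inE eqxx ?orbT.
- have vw' : v != w by rewrite eq_sym.
  rewrite (face_hyp hF hv wF vw') FE; apply: consec3 => //; first by rewrite eq_sym.
    by rewrite !inE eqxx ?orbT.
  by rewrite !inE eqxx ?orbT.
Qed.

Definition adjS F := [set F2 | inner_face e p F2 & dual_adj e p F F2].

Lemma adj_pair F F2 : F2 \in adjS F -> inner_face e p F2 /\ F != F2 /\
  exists u v, [/\ u != v, u \in F, v \in F, u \in F2 & v \in F2].
Proof.
rewrite inE => /andP [hF2 /andP [nF /existsP [u /existsP [v H]]]].
case/and5P: H => uv _ uF vF /and4P [uF2 vF2 _ _].
by split => //; split => //; exists u, v.
Qed.

Lemma side_of_adj u v t F2 : e u v -> e v t -> e u t -> inner_face e p F2 ->
  u \in F2 -> v \in F2 -> F2 != [set u; v; t] -> side u v t.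
Proof.
move=> huv hvt hut hF2 uF vF nF.
have uv : u != v by apply: contraTneq huv => ->; rewrite eirr.
have [w [FE wu wv huw hvw]] := third hF2 uF vF uv.
have wt : w != t by apply: contraNneq nF => <-; rewrite FE.
apply: (side_of (y := w)) => //.
- by apply: contraTneq hut => ->; rewrite eirr.
- by apply: contraTneq hvt => ->; rewrite eirr.
Qed.

Lemma uniq_adj u v t F2 F3 : e u v -> e v t -> e u t ->
  inner_face e p F2 -> inner_face e p F3 ->
  u \in F2 -> v \in F2 -> u \in F3 -> v \in F3 ->
  F2 != [set u; v; t] -> F3 != [set u; v; t] -> F2 = F3.
Proof.
move=> huv hvt hut hF2 hF3 uF2 vF2 uF3 vF3 n2 n3.
have uv : u != v by apply: contraTneq huv => ->; rewrite eirr.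
have tu : t != u by apply: contraTneq hut => ->; rewrite eirr.
have tv : t != v by apply: contraTneq hvt => ->; rewrite eirr.
have [w [F2E wu wv huw hvw]] := third hF2 uF2 vF2 uv.
have [w' [F3E wu' wv' huw' hvw']] := third hF3 uF3 vF3 uv.
have wt : w != t by apply: contraNneq n2 => <-; rewrite F2E.
have wt' : w' != t by apply: contraNneq n3 => <-; rewrite F3E.
case: (eqVneq w w') => [ew|ww]; first by rewrite F2E F3E ew.
have o1 := opp huv hut hvt huw hvw wt wu wv tu tv.
have o2 := opp huv hut hvt huw' hvw' wt' wu' wv' tu tv.
have ww' : w' != w by rewrite eq_sym.
have o3 := opp huv huw hvw huw' hvw' ww' wu' wv' wu wv.
by move: o1 o2 o3; case: (inb u v t); case: (inb u v w); case: (inb u v w').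
Qed.

Lemma exist_adj u v t : e u v -> e v t -> e u t -> side u v t ->
  exists y, [/\ [set u; v; y] \in adjS [set u; v; t], y != t, y != u & y != v].
Proof.
move=> huv hvt hut hs.
have uv : u != v by apply: contraTneq huv => ->; rewrite eirr.
have tu : t != u by apply: contraTneq hut => ->; rewrite eirr.
have tv : t != v by apply: contraTneq hvt => ->; rewrite eirr.
have [y [huy hvy yu yv hin]] := apex_sep huv hs.
have yt : y != t by apply: contraNneq hin => ->.
exists y; split => //.
have vy : v != y by rewrite eq_sym.
have uy : u != y by rewrite eq_sym.
rewrite inE tri_face //=.
apply/andP; split.
  apply/negP => /eqP E.
  have : y \in [set u; v; t] by rewrite E !inE eqxx orbT.
  by rewrite !inE (negbTE yu) (negbTE yv) (negbTE yt).
apply/existsP; exists u; apply/existsP; exists v.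
rewrite uv huv !inE !eqxx ?orbT /=.
apply/andP; split; apply: consec3; rewrite ?inE ?eqxx ?orbT //; by rewrite eq_sym.
Qed.

Lemma set3C3 (a b c : T) : [set a; b; c] = [set b; c; a].
Proof. by rewrite set3C1 set3C2. Qed.

Definition Spair F u v := [set F2 | (F2 \in adjS F) && (u \in F2) && (v \in F2)].

Lemma le1 F u v t : e u v -> e v t -> e u t -> F = [set u; v; t] -> #|Spair F u v| <= 1.
Proof.
move=> huv hvt hut FE.
apply/card_le1_eqP => F2 F3; rewrite !inE.
move=> /andP [/andP [h2 u2] v2] /andP [/andP [h3 u3] v3].
have h2' : F2 \in adjS F by rewrite inE.
have h3' : F3 \in adjS F by rewrite inE.
have [hF2 [n2 _]] := adj_pair h2'.
have [hF3 [n3 _]] := adj_pair h3'.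
apply: (uniq_adj huv hvt hut hF3 hF2) => //; by rewrite -FE eq_sym.
Qed.

Lemma missing a b c : e a b -> e b c -> e a c -> ~ side a b c ->
  #|adjS [set a; b; c]| <= 2.
Proof.
move=> hab hbc hac hns.
have hba : e b a by rewrite esym.
have hcb : e c b by rewrite esym.
have hca : e c a by rewrite esym.
have sub : adjS [set a; b; c] \subset Spair [set a; b; c] b c :|: Spair [set a; b; c] a c.
  apply/subsetP => F2 h; have [hF2 [nF [u [v [uv uF vF uF2 vF2]]]]] := adj_pair h.
  have nF' : F2 != [set a; b; c] by rewrite eq_sym.
  have h' : inner_face e p F2 && dual_adj e p [set a; b; c] F2 by rewrite inE in h.
  rewrite !inE h' /=.
  move: uF vF uF2 vF2 uv; rewrite !inE -!orbA => /or3P [] /eqP -> /or3P [] /eqP -> uF2 vF2 uv;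
    rewrite ?eqxx // in uv; rewrite ?uF2 ?vF2 ?orbT //; exfalso; apply: hns.
  - exact: side_of_adj hab hbc hac hF2 uF2 vF2 nF'.
  - exact: side_of_adj hab hbc hac hF2 vF2 uF2 nF'.
have l1 := le1 hbc hca hba (set3C3 a b c).
have l2 := le1 hac hcb hab (set3C2 a b c).
have := subset_leq_card sub; rewrite cardsU.
move: l1 l2; set x := #|_ :&: _|; clear; lia.
Qed.

Lemma all_sides a b c : e a b -> e b c -> e a c -> side a b c -> side b c a -> side a c b ->
  #|adjS [set a; b; c]| = 3.
Proof.
move=> hab hbc hac s1 s2 s3.
have hba : e b a by rewrite esym.
have hcb : e c b by rewrite esym.
have hca : e c a by rewrite esym.
have ab : a != b by apply: contraTneq hab => ->; rewrite eirr.
have bc : b != c by apply: contraTneq hbc => ->; rewrite eirr.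
have ac : a != c by apply: contraTneq hac => ->; rewrite eirr.
have [y1 [m1 y1c y1a y1b]] := exist_adj hab hbc hac s1.
have [y2 [m2 y2a y2b y2c]] := exist_adj hbc hca hba s2.
have [y3 [m3 y3b y3a y3c]] := exist_adj hac hcb hab s3.
rewrite -(set3C3 a b c) in m2; rewrite -(set3C2 a b c) in m3.
set Fab := [set a; b; y1] in m1 *.
set Fbc := [set b; c; y2] in m2 *.
set Fac := [set a; c; y3] in m3 *.
have [hFab [nab _]] := adj_pair m1.
have [hFbc [nbc _]] := adj_pair m2.
have [hFac [nac _]] := adj_pair m3.
have E : adjS [set a; b; c] = [set Fab; Fbc; Fac].
  apply/eqP; rewrite eqEsubset; apply/andP; split; last first.
    apply/subsetP => z; rewrite !inE -!orbA => /or3P [] /eqP ->;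
      [move: m1|move: m2|move: m3]; by rewrite inE.
  apply/subsetP => F2 h; have [hF2 [nF [u [v [uv uF vF uF2 vF2]]]]] := adj_pair h.
  have nF' : F2 != [set a; b; c] by rewrite eq_sym.
  have nab' : Fab != [set a; b; c] by rewrite eq_sym.
  have nbc' : Fbc != [set b; c; a] by rewrite eq_sym -(set3C3 a b c).
  have nac' : Fac != [set a; c; b] by rewrite eq_sym -(set3C2 a b c).
  have nF2 : F2 != [set b; c; a] by rewrite -(set3C3 a b c).
  have nF3 : F2 != [set a; c; b] by rewrite -(set3C2 a b c).
  have aab : a \in Fab by rewrite !inE !eqxx ?orbT.
  have bab : b \in Fab by rewrite !inE !eqxx ?orbT.
  have bbc : b \in Fbc by rewrite !inE !eqxx ?orbT.
  have cbc : c \in Fbc by rewrite !inE !eqxx ?orbT.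
  have aac : a \in Fac by rewrite !inE !eqxx ?orbT.
  have cac : c \in Fac by rewrite !inE !eqxx ?orbT.
  rewrite !inE.
  move: uF vF uF2 vF2 uv; rewrite !inE -!orbA => /or3P [] /eqP -> /or3P [] /eqP -> uF2 vF2 uv;
    rewrite ?eqxx // in uv.
  - by rewrite (uniq_adj hab hbc hac hF2 hFab uF2 vF2 aab bab nF' nab') eqxx.
  - by rewrite (uniq_adj hac hcb hab hF2 hFac uF2 vF2 aac cac nF3 nac') eqxx ?orbT.
  - by rewrite (uniq_adj hab hbc hac hF2 hFab vF2 uF2 aab bab nF' nab') eqxx.
  - by rewrite (uniq_adj hbc hca hba hF2 hFbc uF2 vF2 bbc cbc nF2 nbc') eqxx ?orbT.
  - by rewrite (uniq_adj hac hcb hab hF2 hFac vF2 uF2 aac cac nF3 nac') eqxx ?orbT.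
  - by rewrite (uniq_adj hbc hca hba hF2 hFbc vF2 uF2 bbc cbc nF2 nbc') eqxx ?orbT.
rewrite E cards3g //.
- apply/negP => /eqP H; have : c \in Fab by rewrite H !inE eqxx ?orbT.
  by rewrite !inE -!orbA => /or3P [] /eqP E'; move: ac bc y1c; rewrite E' eqxx.
- apply/negP => /eqP H; have : a \in Fbc by rewrite H !inE eqxx ?orbT.
  by rewrite !inE -!orbA => /or3P [] /eqP E'; move: ab ac y2a; rewrite E' eqxx.
- apply/negP => /eqP H; have : b \in Fab by rewrite !inE eqxx ?orbT.
  by rewrite H !inE -!orbA => /or3P [] /eqP E'; move: ab bc y3b; rewrite E' eqxx.
Qed.

Lemma sides_of_full a b c : fullb a b c ->
  (e a b /\ e b c /\ e a c) /\ (side a b c /\ side b c a /\ side a c b).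
Proof.
case/and5P=> h1 h2 hab hbc /and4P[hac /existsP[w1 hw1] /existsP[w2 hw2] /existsP[w3 hw3]].
split => //; split; [|split].
- exists w1; split; [apply/negP=> /eqP E|apply/negP=> /eqP E|];
    move: hw1 h1 h2; rewrite ?E /inb; clear; lia.
- exists w2; split; [apply/negP=> /eqP E|apply/negP=> /eqP E|];
    move: hw2 h1 h2; rewrite ?E /inb; clear; lia.
- exists w3; split; [apply/negP=> /eqP E|apply/negP=> /eqP E|];
    move: hw3 h1 h2; rewrite ?E /inb; clear; lia.
Qed.

Lemma C3 : almost_dual_deg3 e p = FT.
Proof.
apply/setP => F; rewrite inE; apply/idP/idP.
  case/andP => hF /eqP h3.
  change (#|adjS F| = 3) in h3.
  have [a [b [c [hab hbc hac FE]]]] := face_tri hF.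
  subst F.
  have hba : e b a by rewrite esym.
  have hcb : e c b by rewrite esym.
  have hca : e c a by rewrite esym.
  apply: full_of => //.
  - case: (sideP a b c) => // hn; exfalso.
    by have := missing hab hbc hac hn; rewrite h3.
  - case: (sideP b c a) => // hn; exfalso.
    by have := missing hbc hca hba hn; rewrite -(set3C3 a b c) h3.
  - case: (sideP a c b) => // hn; exfalso.
    by have := missing hac hcb hab hn; rewrite -(set3C2 a b c) h3.
rewrite inE => /existsP [a /existsP [b /existsP [c /andP [/eqP -> hf]]]].
have [[hab [hbc hac]] [s1 [s2 s3]]] := sides_of_full hf.
rewrite tri_face //=; apply/eqP.
exact: all_sides.
Qed.

Lemma final : #|central_sets e| = #|triangles (reduced_rel e)| /\
  #|triangles (reduced_rel e)| = #|almost_dual_deg3 e p|.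
Proof. by rewrite C1 C2 C3. Qed.
End Main.

Unset Implicit Arguments.
Unset Strict Implicit.

Theorem lemma4p10 (T : finType) (e : rel T) (p : T -> nat) :
  simple_graph e -> maximal_outerplanar e -> outerplanar_emb e p ->
  #|central_sets e| = #|triangles (reduced_rel e)| /\
  #|triangles (reduced_rel e)| = #|almost_dual_deg3 e p|.
Proof.
move=> [hs hi] [_ hM] [hinj hN].
by apply: (final hs hi hinj hN hM).
Qed.
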